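(* Let $d\ge4$ be even. Let $C^0=\{L^0_{a,a}\}_{a=0}^{d-1}$ and $C^s=\{L^s_{1,i}\}_{i=0}^{d-1}$ for $s=1,2$. Then $C^0\cup C^1\cup C^2$ consists of $3d$ pairwise disjoint lines on ${\rm F}_d$.
   Context: ${\rm F}_d\subset\mathbb{P}^3(\mathbb{C})$ is the surface $x^d-y^d-z^d+w^d=0$. Fix a primitive $d$-th root of unity $\eta$ and any $v\in\mathbb{C}$ with $v^d=-1$. For $k,i\in\{0,\dots,d-1\}$ define the lines $L^0_{k,i}:\{y=\eta^i x,\ w=\eta^k z\}$, $L^1_{k,i}:\{x=\eta^{k+i}z,\ y=\eta^i w\}$, $L^2_{k,i}:\{x=v\eta^i w,\ y=v\eta^{k+i}z\}$, all lying on ${\rm F}_d$. *)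

(* Defs.v *)
From HB Require Import structures.
From mathcomp Require Import all_boot all_order all_algebra.
From mathcomp Require Import complex.
From mathcomp Require Import Rstruct.
From Stdlib Require Import Reals.

Set Implicit Arguments.
Unset Strict Implicit.
Unset Printing Implicit Defensive.
Import Order.TTheory GRing.Theory Num.Theory.
Local Open Scope ring_scope.

Definition C : numClosedFieldType := (complex R : numClosedFieldType).

(* Homogeneous coordinates (x, y, z, w) of a point of P^3(C); a point of
   P^3 is represented by a nonzero quadruple (up to scaling). All the
   subsets below are defined by homogeneous equations, hence are cones. *)
Definition hpt := (C * C * C * C)%type.
Definition px (p : hpt) : C := p.1.1.1.
Definition py (p : hpt) : C := p.1.1.2.
Definition pz (p : hpt) : C := p.1.2.
Definition pw (p : hpt) : C := p.2.
Definition nonzero_pt (p : hpt) : Prop := p <> (0, 0, 0, 0).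

Definition on_Fd (d : nat) (p : hpt) : Prop :=
  px p ^+ d - py p ^+ d - pz p ^+ d + pw p ^+ d = 0.

Definition L0 (eta : C) (k i : nat) (p : hpt) : Prop :=
  py p = eta ^+ i * px p /\ pw p = eta ^+ k * pz p.
Definition L1 (eta : C) (k i : nat) (p : hpt) : Prop :=
  px p = eta ^+ (k + i) * pz p /\ py p = eta ^+ i * pw p.
Definition L2 (eta v : C) (k i : nat) (p : hpt) : Prop :=
  px p = v * eta ^+ i * pw p /\ py p = v * eta ^+ (k + i) * pz p.

Definition confLine (eta v : C) (s : 'I_3) (i : nat) (p : hpt) : Prop :=
  match nat_of_ord s with
  | 0 => L0 eta i i p
  | 1 => L1 eta 1 i p
  | _ => L2 eta v 1 i p
  end.

(* Main.v *)
Require Import Defs.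
From HB Require Import structures.
From mathcomp Require Import all_boot all_order all_algebra.
From mathcomp Require Import ring lra zify.
Import GRing.Theory Num.Theory.
Local Open Scope ring_scope.

Lemma zero_of (a b z : C) : a != b -> a * z = b * z -> z = 0.
Proof.
move=> ab e; apply/eqP.
have: (a - b) * z == 0 by rewrite mulrBl e subrr.
by rewrite mulf_eq0 subr_eq0 (negbTE ab).
Qed.

Arguments zero_of {a b z}.

Section S.
Variables (d : nat) (eta v : C).
Hypotheses (d4 : (4 <= d)%N) (ev : ~~ odd d) (prim : d.-primitive_root eta)
  (hv : v ^+ d = -1).

Lemma eta_nz : eta != 0.
Proof.
apply/eqP => e0; have := prim_expr_order prim; rewrite e0 expr0n.
have -> : (d == 0)%N = false by apply/eqP; lia.
by move/eqP; rewrite eq_sym oner_eq0.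
Qed.

Lemma v_nz : v != 0.
Proof.
apply/eqP => e0; move: hv; rewrite e0 expr0n.
have -> : (d == 0)%N = false by apply/eqP; lia.
by move/eqP; rewrite eq_sym oppr_eq0 oner_eq0.
Qed.

Lemma eta_inj k (i j : nat) : (i < d)%N -> (j < d)%N -> i <> j ->
  eta ^+ (k + i) != eta ^+ (k + j).
Proof.
move=> id jd ij; rewrite (eq_prim_root_expr prim) eqn_modDl !modn_small //.
by apply/eqP.
Qed.

Lemma eta_ne1 : eta != 1.
Proof.
have := @eta_inj 0 1 0; rewrite !add0n expr1 expr0; apply; lia.
Qed.

Lemma eta2 (i : nat) : eta ^+ (i + i) != eta ^+ 1.
Proof.
rewrite (eq_prim_root_expr prim); apply/negP => /eqP h.
have := congr1 (modn ^~ 2) h; rewrite /= !modn_dvdm ?dvdn2 //; lia.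
Qed.

Lemma expd (i : nat) : (eta ^+ i) ^+ d = 1.
Proof. by rewrite exprAC (prim_expr_order prim) expr1n. Qed.

Lemma key12 (i j : nat) :
  eta * eta ^+ (i + i) != v * v * eta * eta ^+ (j + j).
Proof.
apply/eqP => e.
have e2 : eta ^+ (i + i) = v * v * eta ^+ (j + j).
  apply: (mulfI eta_nz); rewrite e; ring.
set h := d./2.
have dE : d = (h + h)%N by rewrite addnn /h even_halfK.
have pw k : (eta ^+ (k + k)) ^+ h = 1.
  by rewrite -exprM (_ : ((k + k) * h = k * d)%N) ?exprM ?expd // dE; nia.
have := congr1 (fun x => x ^+ h) e2; rewrite /= !exprMn !pw.
rewrite -exprMn -expr2 -exprM (_ : (2 * h = d)%N) ?hv; last by rewrite dE; lia.
rewrite mulr1 => h1.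
have : (2%:R : C) = 0 by rewrite mulr2n {2}h1 subrr.
by move/eqP; rewrite pnatr_eq0.
Qed.

Lemma disj (s t : 'I_3) (i j : 'I_d) : (s, i) <> (t, j) -> (s <= t)%N ->
  forall p : hpt, nonzero_pt p ->
       confLine eta v s i p -> confLine eta v t j p -> False.
Proof.
move=> neq st [[[x y] z] w] nzp.
have Hij : (s : nat) = t -> (i : nat) <> j.
  by move=> e1 e2; apply: neq; congr pair; apply: val_inj.
have iinj := @eta_inj _ i j (ltn_ord i) (ltn_ord j).
have allz : x = 0 -> y = 0 -> z = 0 -> w = 0 -> False.
  by move=> x0 y0 z0 w0; apply: nzp; rewrite x0 y0 z0 w0.
rewrite /confLine /L0 /L1 /L2 /px /py /pz /pw /=.
move: neq; case: s st Hij => [[|[|[|s]]] Hs] //= ; case: t => [[|[|[|t]]] Ht] //= _ Hij _.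
- move=> [hy1 hw1] [hy2 hw2].
  have ij := Hij erefl.
  have x0 : x = 0 by apply: (zero_of (iinj 0%N ij)); rewrite !add0n -hy1 -hy2.
  have z0 : z = 0 by apply: (zero_of (iinj 0%N ij)); rewrite !add0n -hw1 -hw2.
  by apply: allz => //; rewrite ?hy1 ?hw1 ?x0 ?z0 mulr0.
- move=> [hy1 hw1] [hx2 hy2]; subst x w; rewrite hy1 in hy2.
  have z0 : z = 0.
    apply: (zero_of (a := eta ^+ (i + j) * eta) (b := eta ^+ (i + j) * 1)).
      by rewrite (inj_eq (mulfI (expf_neq0 _ eta_nz))) eta_ne1.
    transitivity (eta ^+ i * (eta ^+ (1 + j) * z)); first by rewrite !exprD expr1; ring.
    by rewrite hy2 exprD; ring.
  by apply: allz => //; rewrite ?hy1 z0 !mulr0.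
- move=> [hy1 hw1] [hx2 hy2]; subst w; subst x; rewrite hy1 in hy2.
  have z0 : z = 0.
    apply: (zero_of (a := v * eta ^+ j * eta ^+ (i + i)) (b := v * eta ^+ j * eta ^+ 1)).
      rewrite (inj_eq (mulfI _)); last by rewrite mulf_neq0 ?v_nz ?expf_neq0 ?eta_nz.
      exact: eta2.
    transitivity (eta ^+ i * (v * eta ^+ j * (eta ^+ i * z))); first by rewrite !exprD; ring.
    by rewrite hy2 !exprD expr1; ring.
  by apply: allz => //; rewrite ?hy1 z0 !mulr0.
- move=> [hx1 hy1] [hx2 hy2].
  have ij := Hij erefl.
  have z0 : z = 0 by apply: (zero_of (iinj 1%N ij)); rewrite -hx1 -hx2.
  have w0 : w = 0 by apply: (zero_of (iinj 0%N ij)); rewrite !add0n -hy1 -hy2.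
  by apply: allz => //; rewrite ?hx1 ?hy1 ?z0 ?w0 mulr0.
- move=> [hx1 hy1] [hx2 hy2]; subst x y.
  have z0 : z = 0.
    apply: (zero_of (key12 i j)).
    transitivity (eta ^+ i * (v * eta ^+ j * w)); first by rewrite -hx2 !exprD expr1; ring.
    transitivity (v * eta ^+ j * (eta ^+ i * w)); first ring.
    by rewrite hy2 !exprD expr1; ring.
  have w0 : w = 0.
    apply: (zero_of (a := eta ^+ i) (b := 0)); first by rewrite expf_neq0 ?eta_nz.
    by rewrite hy2 z0 !mulr0 mul0r.
  by apply: allz => //; rewrite ?hx1 ?z0 ?w0 mulr0.
- move=> [hx1 hy1] [hx2 hy2].
  have ij := Hij erefl.
  have w0 : w = 0.
    apply: (zero_of (a := v * eta ^+ (0 + i)) (b := v * eta ^+ (0 + j))).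
      by rewrite (inj_eq (mulfI v_nz)) iinj.
    by rewrite !add0n -hx1 -hx2.
  have z0 : z = 0.
    apply: (zero_of (a := v * eta ^+ (1 + i)) (b := v * eta ^+ (1 + j))).
      by rewrite (inj_eq (mulfI v_nz)) iinj.
    by rewrite -hy1 -hy2.
  by apply: allz => //; rewrite ?hx1 ?hy1 ?z0 ?w0 mulr0.
Qed.

End S.

Lemma auxr (a b c e : C) : a = c -> b = e -> a - c - b + e = 0.
Proof. by move=> -> ->; rewrite subrr sub0r addNr. Qed.

Lemma auxr2 (a b : C) : a - b - a + b = 0.
Proof. ring. Qed.

Lemma auxr3 (a b : C) : - a + b - b + a = 0.
Proof. ring. Qed.

Theorem proposition4p1 (d : nat) (eta v : C) :
  (4 <= d)%N -> ~~ odd d ->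
  d.-primitive_root eta -> v ^+ d = -1 ->
  (forall (s : 'I_3) (i : 'I_d) (p : hpt), confLine eta v s i p -> on_Fd d p) /\
  (forall (s t : 'I_3) (i j : 'I_d), (s, i) <> (t, j) ->
     forall p : hpt, nonzero_pt p ->
       confLine eta v s i p -> confLine eta v t j p -> False).
Proof.
move=> d4 ev prim hv; split.
- move=> s i [[[x y] z] w]; rewrite /confLine /on_Fd /L0 /L1 /L2 /px /py /pz /pw /=.
  have e1 := @expd _ _ prim.
  case: s => [[|[|[|s]]] Hs] //= [-> ->]; rewrite !exprMn ?e1 ?hv ?mulr1 ?mul1r ?mulN1r ?opprK.
  + exact: auxr.
  + exact: auxr2.
  + exact: auxr3.
- move=> s t i j neq p nzp.
  case: (leqP s t) => st.
    exact: (@disj d eta v d4 ev prim hv _ _ _ _ neq st _ nzp).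
  move=> h1 h2; apply: (@disj d eta v d4 ev prim hv _ _ _ _ _ (ltnW st) _ nzp h2 h1).
  by move=> e; apply: neq; rewrite e.
Qed.
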